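(* Let $\mathcal{H}^c_{D_n}$ be the degenerate affine Hecke–Clifford algebra of type $D_n$, $n\ge4$, and let $w\in W_{D_n}$ have signed cycle type $(\lambda,\mu)$. If $n$ is odd and it is not the case that ($\lambda\in\mathcal{OP}$, $\mu\in\mathcal{EP}$ and $\ell(\mu)$ even), then $w\in[\mathcal{H}^c_{D_n},\mathcal{H}^c_{D_n}]$. If $n$ is even, it is not the case that ($\lambda\in\mathcal{OP}$, $\mu\in\mathcal{EP}$ and $\ell(\mu)$ even), and it is not the case that ($\lambda=\emptyset$ and $\mu\in\mathcal{SOP}_n$), then $w\in[\mathcal{H}^c_{D_n},\mathcal{H}^c_{D_n}]$.
   Context: $W_{D_n}$ is the group of signed permutations of $\{1,\dots,n\}$ with an even number of sign changes, generated by $s_i=(i,i+1)$ ($1\le i\le n-1$) and $s_n$ with $s_n(e_{n-1})=-e_n$, $s_n(e_n)=-e_{n-1}$. The signed cycle type $(\lambda,\mu)$ of $w$: $\lambda$ (resp. $\mu$) lists the lengths of cycles of the underlying permutation with an even (resp. odd) number of sign changes. $\mathcal{OP}$: partitions with all parts odd; $\mathcal{EP}$: all parts even; $\mathcal{SOP}_n$: partitions of $n$ into distinct odd parts; $\ell(\mu)$ number of parts. With parameter $u\in\mathbb{C}$, $\mathcal{H}^c_{D_n}$ is generated by commuting $x_1,\dots,x_n$, Clifford generators $c_1,\dots,c_n$ ($c_i^2=1$, $c_ic_j=-c_jc_i$, $i\ne j$) and $W_{D_n}$, with these as subalgebras and relations $x_ic_i=-c_ix_i$, $x_ic_j=c_jx_i$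 ($i\ne j$), $\sigma c_i=c_{\sigma(i)}\sigma$ for $\sigma\in\langle s_1,\dots,s_{n-1}\rangle$, $x_{i+1}s_i-s_ix_i=u(1-c_{i+1}c_i)$, $x_js_i=s_ix_j$ ($j\ne i,i+1$) for $i<n$, and $s_nc_n=-c_{n-1}s_n$, $s_nc_i=c_is_n$ ($i\ne n-1,n$), $s_nx_n+x_{n-1}s_n=-u(1+c_{n-1}c_n)$, $s_nx_i=x_is_n$ ($i\ne n-1,n$). $[H,H]$ is the linear span of all $hh'-h'h$. *)

(* Defs.v *)
From mathcomp Require Import all_boot all_order all_algebra all_fingroup.
From mathcomp Require Import Rstruct complex.
Set Implicit Arguments. Unset Strict Implicit. Unset Printing Implicit Defensive.
Import GRing.Theory.
Local Open Scope ring_scope.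

Definition CC : fieldType := complex Rdefinitions.R.

(* A signed permutation of {1..n} is encoded as a permutation of the set
   {+-e_i} = 'I_n * bool, where (i,false) stands for e_i and (i,true) for
   -e_i, commuting with negation. *)
Definition sneg n (v : 'I_n * bool) : 'I_n * bool := (v.1, ~~ v.2).

Definition signed_perm n (w : {perm 'I_n * bool}) : bool :=
  [forall v, w (sneg v) == sneg (w v)].

Definition under n (w : {perm 'I_n * bool}) (i : 'I_n) : 'I_n := (w (i, false)).1.
Definition signch n (w : {perm 'I_n * bool}) (i : 'I_n) : bool := (w (i, false)).2.

Definition WD n : {set {perm 'I_n * bool}} :=
  [set w | signed_perm w && ~~ odd #|[set i | signch w i]|].

(* s_i = (i, i+1) (for 0-indexed i, j = i+1) *)
Definition sswap n (i j : 'I_n) : {perm 'I_n * bool} :=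
  (tperm (i, false) (j, false) * tperm (i, true) (j, true))%g.
(* s_n : e_a |-> -e_b, e_b |-> -e_a  (a = n-1, b = n in 1-indexed terms) *)
Definition snswap n (a b : 'I_n) : {perm 'I_n * bool} :=
  (tperm (a, false) (b, true) * tperm (a, true) (b, false))%g.

Definition Sgens n : {set {perm 'I_n * bool}} :=
  [set sswap p.1 p.2 | p : ('I_n * 'I_n) & val p.2 == (val p.1).+1].

Definition wcycles n (w : {perm 'I_n * bool}) : seq (seq 'I_n) :=
  [seq fingraph.orbit (under w) r | r <- enum 'I_n & froot (under w) r == r].

Definition ctype_lambda n (w : {perm 'I_n * bool}) : seq nat :=
  sort geq [seq size cy | cy <- wcycles w & ~~ odd (count (signch w) cy)].
Definition ctype_mu n (w : {perm 'I_n * bool}) : seq nat :=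
  sort geq [seq size cy | cy <- wcycles w & odd (count (signch w) cy)].

Definition isOP (p : seq nat) : bool := all odd p.
Definition isEP (p : seq nat) : bool := all (fun k => ~~ odd k) p.
Definition isSOP (n : nat) (p : seq nat) : bool :=
  [&& uniq p, all odd p & sumn p == n].

(* Group law:
   mathcomp's (g * h)%g is "first g, then h", i.e. the composite h o g, so
   rho (g * h) = rho h * rho g expresses rho(h o g) = rho h rho g. *)
Definition HC_rels n (u : CC) (A : algType CC) (x c : 'I_n -> A)
    (rho : {perm 'I_n * bool} -> A) : Prop :=
  (forall i j, x i * x j = x j * x i) /\
  (forall i, c i * c i = 1) /\
  (forall i j, i != j -> c i * c j = - (c j * c i)) /\
  rho 1%g = 1 /\
  (forall g h, g \in WD n -> h \in WD n -> rho (g * h)%g = rho h * rho g) /\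
  (forall i, x i * c i = - (c i * x i)) /\
  (forall i j, i != j -> x i * c j = c j * x i) /\
  (forall s i, s \in <<Sgens n>>%g -> rho s * c i = c (under s i) * rho s) /\
  (forall i j : 'I_n, val j = (val i).+1 ->
     x j * rho (sswap i j) - rho (sswap i j) * x i = u *: (1 - c j * c i)) /\
  (forall i j k : 'I_n, val j = (val i).+1 -> k != i -> k != j ->
     x k * rho (sswap i j) = rho (sswap i j) * x k) /\
  (forall a b : 'I_n, val a = (n - 2)%N -> val b = (n - 1)%N ->
     rho (snswap a b) * c b = - (c a * rho (snswap a b))) /\
  (forall a b k : 'I_n, val a = (n - 2)%N -> val b = (n - 1)%N -> k != a -> k != b ->
     rho (snswap a b) * c k = c k * rho (snswap a b)) /\
  (forall a b : 'I_n, val a = (n - 2)%N -> val b = (n - 1)%N ->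
     rho (snswap a b) * x b + x a * rho (snswap a b) = - (u *: (1 + c a * c b))) /\
  (forall a b k : 'I_n, val a = (n - 2)%N -> val b = (n - 1)%N -> k != a -> k != b ->
     rho (snswap a b) * x k = x k * rho (snswap a b)).

Definition in_comm_span (A : algType CC) (z : A) : Prop :=
  exists s : seq (CC * A * A),
    z = \sum_(t <- s) t.1.1 *: (t.1.2 * t.2 - t.2 * t.1.2).

(* Main.v *)
Require Import Defs.
From mathcomp Require Import all_boot all_order all_algebra all_fingroup.
From mathcomp Require Import Rstruct complex.
From mathcomp Require Import zify.
Import GRing.Theory.
Local Open Scope ring_scope.
Set Implicit Arguments. Unset Strict Implicit. Unset Printing Implicit Defensive.

Ltac tsplit := match goal with
 | |- context[@fun_of_perm _ (@tperm _ ?a ?b) ?z] => lazymatch z with context[tperm _ _] => fail | _ => case: (tpermP a b z) end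
 end.
Ltac pfin := repeat match goal with
  | H : (_, _) = (_, _) |- _ => case: H; intros
  | H : ?a = ?b |- _ => first [ subst a | subst b | discriminate H ]
  end;
  try reflexivity;
  try (exfalso; match goal with H : ~ _ |- _ => apply: H; reflexivity end).
Ltac tcase := repeat (tsplit; intros); pfin.

Section Comb.
Variable n : nat.
Implicit Types (g h w : {perm 'I_n * bool}).

Lemma wE g : signed_perm g -> forall v, g v = (under g v.1, signch g v.1 (+) v.2).
Proof.
move=> /forallP sg [i b] /=; rewrite /under /signch.
case: b => /=; last by rewrite addbF; case: (g (i, false)).
have := sg (i, false); rewrite /sneg /= => /eqP ->.
by case: (g (i,false)) => a e /=; rewrite addbT.
Qed.

Lemma under_inj g : signed_perm g -> injective (under g).
Proof.
move=> sg i j eq.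
have h1 := wE sg (i, signch g i); have h2 := wE sg (j, signch g j).
rewrite /= addbb eq in h1; rewrite /= addbb in h2.
by have := perm_inj (etrans h1 (esym h2)) => -[].
Qed.

Lemma signed_mul g h : signed_perm g -> signed_perm h -> signed_perm (g * h)%g.
Proof.
move=> /forallP sg /forallP sh; apply/forallP => v; rewrite !permM.
by rewrite (eqP (sg v)) (eqP (sh _)).
Qed.

Lemma under_mul g h : signed_perm h -> forall i,
  under (g * h)%g i = under h (under g i).
Proof. by move=> sh i; rewrite /under permM (wE sh). Qed.

Lemma signch_mul g h : signed_perm h -> forall i,
  signch (g * h)%g i = signch g i (+) signch h (under g i).
Proof. by move=> sh i; rewrite /signch permM (wE sh) /= addbC. Qed.

Lemma odd_card (p : pred 'I_n) : odd #|[set i | p i]| = \big[addb/false]_i p i.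
Proof.
rewrite -sum1_card big_mkcond /=.
rewrite (big_morph odd oddD (erefl : odd 0 = false)).
by apply: eq_bigr => i _; rewrite inE; case: (p i).
Qed.

Lemma mulWD g h : g \in WD n -> h \in WD n -> (g * h)%g \in WD n.
Proof.
rewrite !inE => /andP[sg og] /andP[sh oh]; rewrite signed_mul //=.
rewrite odd_card.
under eq_bigr do rewrite signch_mul //.
rewrite big_split /= -(reindex_inj (P:=predT) (F:=signch h) (under_inj sg)) /=.
by rewrite -!odd_card (negbTE og) (negbTE oh).
Qed.


Definition uperm_fun (p : {perm 'I_n}) (v : 'I_n * bool) := (p v.1, v.2).
Lemma uperm_inj (p : {perm 'I_n}) : injective (uperm_fun p).
Proof. by move=> [a b] [c d] [/perm_inj -> ->]. Qed.
Definition uperm (p : {perm 'I_n}) : {perm 'I_n * bool} := perm (@uperm_inj p).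
Lemma upermE (p : {perm 'I_n}) v : uperm p v = (p v.1, v.2).
Proof. by rewrite permE. Qed.

Lemma uperm_tperm (x y : 'I_n) : uperm (tperm x y) = sswap x y.
Proof. by apply/permP => -[k []]; rewrite upermE /sswap permM /=; tcase. Qed.

Lemma upermM (p q : {perm 'I_n}) : uperm (p * q)%g = (uperm p * uperm q)%g.
Proof. by apply/permP => v; rewrite permM !upermE permM. Qed.

Lemma uperm1 : uperm 1%g = 1%g.
Proof. by apply/permP => -[k s]; rewrite upermE !perm1. Qed.

Lemma sswap_gen1 (x y : 'I_n) : val y = (val x).+1 -> sswap x y \in <<Sgens n>>%g.
Proof. by move=> hy; apply: mem_gen; apply/imsetP; exists (x, y) => //; rewrite inE /= hy. Qed.

Lemma sswap_gen_d d : forall (x y : 'I_n), val y = (val x + d.+1)%N -> sswap x y \in <<Sgens n>>%g.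
Proof.
elim: d => [|d IH] x y hy.
  apply: mem_gen; apply/imsetP; exists (x, y); last by [].
  by rewrite inE /= hy addn1.
have hz : (val x + d.+1 < n)%N by have := ltn_ord y; rewrite hy; lia.
pose z : 'I_n := Ordinal hz.
have e1 : sswap x z \in <<Sgens n>>%g by apply: IH.
have e2 : sswap z y \in <<Sgens n>>%g.
  by apply: sswap_gen1; rewrite /z /= hy addnS.
have -> : sswap x y = (sswap z y * sswap x z * sswap z y)%g.
  rewrite -!uperm_tperm -!upermM; congr uperm.
  have : (tperm x z ^ tperm z y)%g = tperm x y.
    have nzx : z != x by rewrite -val_eqE /=; lia.
    have nyx : y != x by apply/eqP => e; move: hy; rewrite e; lia.
    by rewrite tpermJ tpermL tpermD // eq_sym.
  by move=> <-; rewrite /conjg tpermV mulgA.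
exact: (groupM (groupM e2 e1) e2).
Qed.

Lemma sswap_gen (x y : 'I_n) : sswap x y \in <<Sgens n>>%g.
Proof.
wlog lxy : x y / (val x <= val y)%N.
  move=> H; case: (leqP (val x) (val y)) => [/H //|/ltnW /H].
  by rewrite -!uperm_tperm tpermC.
case: (ltngtP (val x) (val y)) lxy => // [lt _ | /val_inj -> _].
  apply: (@sswap_gen_d (val y - val x).-1); rewrite prednK ?subn_gt0 //.
  by rewrite subnKC // ltnW.
by rewrite -uperm_tperm tperm1 uperm1 group1.
Qed.

Lemma uperm_gen (p : {perm 'I_n}) : uperm p \in <<Sgens n>>%g.
Proof.
have [ts -> _] := prod_tpermP p.
elim: ts => [|t ts IH]; first by rewrite big_nil uperm1 group1.
by rewrite big_cons upermM; apply: groupM => //; rewrite uperm_tperm sswap_gen.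
Qed.

Definition flip_fun (i j : 'I_n) (v : 'I_n * bool) := (v.1, v.2 (+) ((v.1 == i) || (v.1 == j))).
Lemma flip_inj (i j : 'I_n) : injective (flip_fun i j).
Proof.
move=> [a s] [b t] /= [eab]; subst b; move: ((a == i) || (a == j)) => e.
by case: s; case: t; case: e.
Qed.
Definition flip2 (i j : 'I_n) : {perm 'I_n * bool} := perm (@flip_inj i j).
Lemma flip2E (i j : 'I_n) v : flip2 i j v = (v.1, v.2 (+) ((v.1 == i) || (v.1 == j))).
Proof. by rewrite permE. Qed.

Lemma flip2_signed (i j : 'I_n) : signed_perm (flip2 i j).
Proof. by apply/forallP => -[k s]; rewrite !flip2E /sneg /= negb_add. Qed.
Lemma under_flip2 (i j k : 'I_n) : under (flip2 i j) k = k.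
Proof. by rewrite /under flip2E. Qed.
Lemma signch_flip2 (i j k : 'I_n) : signch (flip2 i j) k = (k == i) || (k == j).
Proof. by rewrite /signch flip2E. Qed.

Lemma flip2WD (i j : 'I_n) : i != j -> flip2 i j \in WD n.
Proof.
move=> nij; rewrite inE flip2_signed /=.
have -> : [set k | signch (flip2 i j) k] = [set i; j].
  by apply/setP => k; rewrite !inE signch_flip2.
by rewrite cards2 nij.
Qed.

Lemma flip2K (i j : 'I_n) : (flip2 i j * flip2 i j)%g = 1%g.
Proof. by apply/permP => v; rewrite permM perm1 !flip2E /= addbK; case: v. Qed.

Lemma flip_ab (a b : 'I_n) : a != b -> flip2 a b = (sswap a b * snswap a b)%g.
Proof.
move/eqP=> nab.
apply/permP => -[k s]; rewrite flip2E /sswap /snswap !permM /=.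
case: s; tcase; rewrite ?eqxx ?orbT //=; 
  repeat (case: eqP; intros); pfin.
Qed.

Lemma snswapE (a b : 'I_n) v : a != b -> snswap a b v = (tperm a b v.1, v.2 (+) ((v.1 == a) || (v.1 == b))).
Proof.
move/eqP=> nab; case: v => k s; rewrite /snswap !permM /=.
case: s; tcase; rewrite ?eqxx ?orbT //=;
  repeat (case: eqP; intros); pfin.
Qed.

Lemma snswap_signed (a b : 'I_n) : a != b -> signed_perm (snswap a b).
Proof. by move=> nab; apply/forallP => -[k s]; rewrite !snswapE // /sneg /= negb_add. Qed.
Lemma under_snswap (a b k : 'I_n) : a != b -> under (snswap a b) k = tperm a b k.
Proof. by move=> nab; rewrite /under snswapE. Qed.
Lemma signch_snswap (a b k : 'I_n) : a != b -> signch (snswap a b) k = (k == a) || (k == b).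
Proof. by move=> nab; rewrite /signch snswapE. Qed.
Lemma snswapWD (a b : 'I_n) : a != b -> snswap a b \in WD n.
Proof.
move=> nij; rewrite inE snswap_signed //=.
have -> : [set k | signch (snswap a b) k] = [set a; b].
  by apply/setP => k; rewrite !inE signch_snswap.
by rewrite cards2 nij.
Qed.
Lemma snswapK (a b : 'I_n) : a != b -> (snswap a b * snswap a b)%g = 1%g.
Proof.
move=> nab; apply/permP => -[k s]; rewrite permM perm1 !snswapE //=.
case: (tpermP a b k) => [->|->|/eqP nka /eqP nkb]; rewrite ?tpermL ?tpermR ?eqxx ?orbT /= ?addbK //.
by rewrite tpermD // eq_sym.
Qed.

Lemma uperm_signed (p : {perm 'I_n}) : signed_perm (uperm p).
Proof. by apply/forallP => -[k s]; rewrite !upermE. Qed.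
Lemma under_uperm (p : {perm 'I_n}) k : under (uperm p) k = p k.
Proof. by rewrite /under upermE. Qed.
Lemma signch_uperm (p : {perm 'I_n}) k : signch (uperm p) k = false.
Proof. by rewrite /signch upermE. Qed.
Lemma upermWD (p : {perm 'I_n}) : uperm p \in WD n.
Proof.
rewrite inE uperm_signed /=.
have -> : [set k | signch (uperm p) k] = set0 by apply/setP => k; rewrite !inE signch_uperm.
by rewrite cards0.
Qed.

Definition NS := [set g : {perm 'I_n * bool} | [forall v, (g v).2 == v.2]].
Lemma NS_group : group_set NS.
Proof.
apply/group_setP; split; first by rewrite inE; apply/forallP => v; rewrite perm1.
move=> g h; rewrite !inE => /forallP Hg /forallP Hh; apply/forallP => v.
by rewrite permM (eqP (Hh _)) (eqP (Hg _)).
Qed.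
Canonical NS_grp := Group NS_group.

Lemma gen_nosign s i : s \in <<Sgens n>>%g -> signch s i = false.
Proof.
move=> hs.
have : s \in NS.
  have : (<<Sgens n>> \subset NS_grp)%g.
    rewrite gen_subG; apply/subsetP => _ /imsetP [p _ ->].
    by rewrite -uperm_tperm inE; apply/forallP => v; rewrite upermE.
  by move/subsetP; apply.
by rewrite inE => /forallP /(_ (i, false)) /eqP.
Qed.

Lemma nosign_uperm g : signed_perm g -> (forall i, signch g i = false) ->
  exists p, g = uperm p.
Proof.
move=> sg H; exists (perm (under_inj sg)).
by apply/permP => -[k s]; rewrite (wE sg) upermE permE /= H.
Qed.

Lemma flip_conj (a b i j : 'I_n) (t : {perm 'I_n}) : t a = i -> t b = j ->
  flip2 i j = (uperm t^-1 * flip2 a b * uperm t)%g.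
Proof.
move=> ta tb; apply/permP => -[k s]; rewrite !permM upermE flip2E upermE /= flip2E /=.
rewrite permKV -ta -tb !(canF_eq (permKV t)) //.
Qed.

End Comb.

Lemma odd_count (T : Type) (q : pred T) (s : seq T) :
  odd (count q s) = \big[addb/false]_(x <- s) q x.
Proof.
elim: s => [|y s IH]; first by rewrite big_nil.
by rewrite /= big_cons oddD IH; case: (q y).
Qed.

Lemma map_traject (T : Type) (f : T -> T) m x : map f (traject f x m) = traject f (f x) m.
Proof. by elim: m x => [|m IH] x //=; rewrite IH. Qed.

Section Cyc.
Variable n : nat.
Implicit Types (w : {perm 'I_n * bool}).

Lemma map_orbit (f : 'I_n -> 'I_n) : injective f -> forall r,
  map f (fingraph.orbit f r) = rot 1 (fingraph.orbit f r).
Proof.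
move=> injf r; rewrite /fingraph.orbit -orderSpred map_traject.
set k := (fingraph.order f r).-1.
rewrite [in RHS]trajectS rot1_cons trajectSr -iterSr /k orderSpred iter_order //.
Qed.

Lemma orbit_cons (f : 'I_n -> 'I_n) r : exists t', fingraph.orbit f r = r :: t'.
Proof. by rewrite /fingraph.orbit -orderSpred trajectS; eexists. Qed.

Lemma parity_cycles w : signed_perm w ->
  odd #|[set i | signch w i]| =
  odd (count (fun cy => odd (count (signch w) cy)) (wcycles w)).
Proof.
move=> sw; set f := under w; have injf : injective f by exact: under_inj.
have symf : connect_sym (frel f) by move=> x y; exact: fconnect_sym.
rewrite odd_card odd_count /wcycles big_map big_filter big_enum_cond /=.
rewrite (partition_big (froot f) (fun r => froot f r == r)) /=; last first.
  by move=> i _; rewrite root_root.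
apply: eq_bigr => r /eqP rr.
rewrite odd_count big_uniq ?fingraph.orbit_uniq //.
apply: eq_bigl => i; rewrite -fingraph.fconnect_orbit.
by rewrite -{1}rr eq_sym (root_connect symf).
Qed.

Lemma good_cycle w : w \in WD n ->
  ~ [&& isOP (ctype_lambda w), isEP (ctype_mu w) & ~~ odd (size (ctype_mu w))] ->
  exists r, odd (count (signch w) (fingraph.orbit (under w) r)) = odd (size (fingraph.orbit (under w) r)).
Proof.
move=> wW nH.
case: (boolP [exists r, odd (count (signch w) (fingraph.orbit (under w) r)) == odd (size (fingraph.orbit (under w) r))]).
  by move=> /existsP [r /eqP e]; exists r.
move=> /existsPn nex; exfalso; apply: nH.
have sw : signed_perm w by move: wW; rewrite inE => /andP[].
have ow : ~~ odd #|[set i | signch w i]| by move: wW; rewrite inE => /andP[].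
have key : forall cy, cy \in wcycles w -> odd (count (signch w) cy) != odd (size cy).
  by move=> cy /mapP [r _ ->]; apply: nex.
apply/and3P; split.
- rewrite /isOP /ctype_lambda all_sort all_map; apply/allP => cy.
  rewrite mem_filter => /andP[ev incy] /=.
  by have := key _ incy; rewrite (negbTE ev); case: (odd (size cy)).
- rewrite /isEP /ctype_mu all_sort all_map; apply/allP => cy.
  rewrite mem_filter => /andP[od incy] /=.
  by have := key _ incy; rewrite od; case: (odd (size cy)).
- by rewrite /ctype_mu size_sort size_map size_filter -parity_cycles.
Qed.
End Cyc.


Section Alg.
Variables (n : nat) (A : algType CC) (c : 'I_n -> A) (rho : {perm 'I_n * bool} -> A).
Hypothesis Hcc : forall i, c i * c i = 1.
Hypothesis Hcac : forall i j, i != j -> c i * c j = - (c j * c i).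
Hypothesis Hr1 : rho 1%g = 1.
Hypothesis Hrm : forall g h, g \in WD n -> h \in WD n -> rho (g * h)%g = rho h * rho g.
Hypothesis Hsc : forall s i, s \in <<Sgens n>>%g -> rho s * c i = c (under s i) * rho s.
Hypothesis Hnc : forall a b : 'I_n, val a = (n - 2)%N -> val b = (n - 1)%N ->
     rho (snswap a b) * c b = - (c a * rho (snswap a b)).
Hypothesis Hnc2 : forall a b k : 'I_n, val a = (n - 2)%N -> val b = (n - 1)%N -> k != a -> k != b ->
     rho (snswap a b) * c k = c k * rho (snswap a b).

Definition Pc g := forall k, rho g * c k = (-1) ^+ (signch g k) * (c (under g k) * rho g).

Lemma signC (m : nat) (y z : A) : y * ((-1) ^+ m * z) = (-1) ^+ m * (y * z).
Proof. by rewrite -signr_odd; case: (odd m); rewrite ?expr0 ?expr1 ?mul1r ?mulN1r ?mulrN. Qed.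

Lemma Pc_mul g h : g \in WD n -> h \in WD n -> Pc g -> Pc h -> Pc (g * h)%g.
Proof.
move=> gW hW Pg Ph k.
have sh : signed_perm h by move: hW; rewrite inE => /andP[].
rewrite Hrm // -mulrA Pg signC mulrA Ph signch_mul // under_mul // signr_addb.
by rewrite -!mulrA signC !mulrA.
Qed.

Lemma Pc_gen s : s \in <<Sgens n>>%g -> Pc s.
Proof. by move=> hs k; rewrite Hsc // gen_nosign // expr0 mul1r. Qed.

Lemma Pc_uperm p : Pc (uperm p).
Proof. exact/Pc_gen/uperm_gen. Qed.

Lemma rho_inv g : g \in WD n -> (g * g)%g = 1%g -> rho g * rho g = 1.
Proof. by move=> gW gg; rewrite -Hrm // gg. Qed.

Lemma Pc_snswap (a b : 'I_n) : val a = (n - 2)%N -> val b = (n - 1)%N -> (1 < n)%N -> Pc (snswap a b).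
Proof.
move=> ha hb n1.
have nab : a != b by rewrite -val_eqE ha hb; apply/eqP; lia.
have sW := snswapWD nab.
have ii := rho_inv sW (snswapK nab).
move=> k; rewrite signch_snswap // under_snswap //.
case: (tpermP a b k) => [->|->|/eqP nka /eqP nkb].
- rewrite eqxx /= expr1 mulN1r.
  have e := Hnc ha hb.
  have e2 : c b * rho (snswap a b) = - (rho (snswap a b) * c a).
    by rewrite -{1}[c b]mul1r -ii -(mulrA (rho _) (rho _)) e mulrN mulNr -!mulrA ii mulr1.
  by rewrite e2 opprK.
- by rewrite eqxx orbT expr1 mulN1r Hnc.
- by rewrite (negbTE nka) (negbTE nkb) expr0 mul1r Hnc2.
Qed.

Lemma Pc_flip (i j : 'I_n) : (1 < n)%N -> i != j -> Pc (flip2 i j).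
Proof.
move=> n1 nij.
have ha : (n - 2 < n)%N by lia.
have hb : (n - 1 < n)%N by lia.
pose a : 'I_n := Ordinal ha; pose b : 'I_n := Ordinal hb.
have nab : a != b by rewrite -val_eqE /=; apply/eqP; lia.
have Pab : Pc (flip2 a b).
  rewrite flip_ab //; apply: Pc_mul.
  - by rewrite -uperm_tperm upermWD.
  - exact: snswapWD.
  - exact/Pc_gen/sswap_gen.
  - exact: Pc_snswap.
pose t := (tperm a i * tperm (tperm a i b) j)%g.
have nb : tperm a i b != i.
  case: (tpermP a i b) => [e|e|ne1 ne2].
  - by move: nab; rewrite e eqxx.
  - by rewrite -e.
  - exact/eqP.
have ta : t a = i by rewrite permM tpermL tpermD // eq_sym.
have tb : t b = j by rewrite permM tpermL.
rewrite (flip_conj ta tb); apply: Pc_mul.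
- exact: mulWD (upermWD _) (flip2WD nab).
- exact: upermWD.
- by apply: Pc_mul; [exact: upermWD | exact: flip2WD | exact: Pc_uperm | exact: Pab].
- exact: Pc_uperm.
Qed.

Lemma Pc_WD w : (1 < n)%N -> w \in WD n -> Pc w.
Proof.
move=> n1; have [m] := ubnP #|[set i | signch w i]|.
elim: m w => // m IH w lt wW.
have sw : signed_perm w by move: wW; rewrite inE => /andP[].
have ow : ~~ odd #|[set i | signch w i]| by move: wW; rewrite inE => /andP[].
case: (set_0Vmem [set i | signch w i]) => [e0 | [i hi]].
  have [p ->] : exists p, w = uperm p.
    apply: nosign_uperm => // i; apply/negP => hi.
    by have := in_set0 i; rewrite -e0 inE hi.
  exact: Pc_uperm.
have [j hj] : exists j, j \in [set i | signch w i] :\ i.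
  case: (set_0Vmem ([set i | signch w i] :\ i)) => [e0 | [j hj]]; last by exists j.
  move: ow; rewrite (cardsD1 i) hi e0 cards0 //.
move: hj; rewrite !inE => /andP[nji hj]; move: hi; rewrite inE => hi.
have nij : i != j by rewrite eq_sym.
have fW := flip2WD nij.
pose w' := (flip2 i j * w)%g.
have w'W : w' \in WD n by exact: mulWD.
have -> : w = (flip2 i j * w')%g by rewrite /w' mulgA flip2K mul1g.
apply: Pc_mul => //; first exact: Pc_flip.
apply: IH => //.
have sub : [set k | signch w' k] \subset [set i | signch w i] :\ i.
  apply/subsetP => k; rewrite !inE /w' signch_mul // under_flip2 signch_flip2.
  case: (eqVneq k i) => [->|nki]; first by rewrite hi.
  case: (eqVneq k j) => [->|nkj]; rewrite ?hj ?eqxx ?orbT //=.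
have := subset_leq_card sub.
move: lt; rewrite (cardsD1 i) inE hi /=.
lia.
Qed.

Lemma prod_push w : Pc w -> forall s : seq 'I_n,
  rho w * \prod_(i <- s) c i =
  (-1) ^+ (count (signch w) s) * (\prod_(i <- map (under w) s) c i * rho w).
Proof.
move=> Pw; elim => [|y s IH]; first by rewrite !big_nil /= expr0 mul1r mulr1 mul1r.
rewrite big_cons mulrA Pw -!mulrA IH signC (mulrA ((-1) ^+ signch w y)) -exprD /= big_cons.
by rewrite !mulrA.
Qed.

Lemma anti x (s : seq 'I_n) : x \notin s ->
  c x * \prod_(i <- s) c i = (-1) ^+ (size s) * (\prod_(i <- s) c i * c x).
Proof.
elim: s => [|y s IH]; first by rewrite !big_nil expr0 mul1r mulr1 mul1r.
rewrite inE negb_or => /andP[nxy nxs].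
rewrite !big_cons mulrA Hcac // mulNr -[c y * c x * _]mulrA IH // signC /= exprS.
by rewrite !mulrA mulN1r !mulNr.
Qed.

Lemma prod_rev (s : seq 'I_n) : \prod_(i <- s) c i * \prod_(i <- rev s) c i = 1.
Proof.
elim: s => [|y s IH]; first by rewrite !big_nil mul1r.
rewrite rev_cons big_rcons big_cons /= -mulrA [X in c y * X]mulrA IH mul1r.
exact: Hcc.
Qed.

Lemma sq_sign m : (-1) ^+ m * (-1) ^+ m = 1 :> A.
Proof. by rewrite -exprD addnn -signr_odd odd_double. Qed.

Lemma cycle_anti w : Pc w -> signed_perm w -> forall r,
  odd (count (signch w) (fingraph.orbit (under w) r)) = odd (size (fingraph.orbit (under w) r)) ->
  in_comm_span (rho w).
Proof.
move=> Pw sw r hodd.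
have injf := under_inj sw.
set t := fingraph.orbit (under w) r in hodd.
have ut : uniq t by exact: fingraph.orbit_uniq.
have mt : map (under w) t = rot 1 t by exact: map_orbit.
have [t' et] := orbit_cons (under w) r; rewrite -/t in et.
set C := \prod_(i <- t) c i.
set D := \prod_(i <- rev t) c i.
have CD : C * D = 1 by exact: prod_rev.
have DC : D * C = 1 by rewrite /D /C -{2}(revK t) prod_rev.
have key : rho w * C = - (C * rho w).
  rewrite /C prod_push // -signr_odd hodd mt et rot1_cons big_rcons /=.
  have nr : r \notin t' by move: ut; rewrite et /= => /andP[].
  have e1 : \prod_(i <- t') c i * c r = (-1) ^+ (size t') * \prod_(i <- r :: t') c i.
    by rewrite big_cons anti // mulrA sq_sign mul1r.
  rewrite e1 -et -/C !mulrA -exprD -signr_odd oddD /= oddb addNb addbb /= expr1 mulN1r.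
  by rewrite mulNr.
have two : (2%:R : CC) != 0.
  by have : (2%:R : complex Rdefinitions.R) != 0 by rewrite Num.Theory.pnatr_eq0.
exists [:: ((2%:R)^-1, rho w * D, C)].
rewrite big_cons big_nil addr0 /=.
have -> : rho w * D * C = rho w by rewrite -mulrA DC mulr1.
have -> : C * (rho w * D) = - rho w.
  by rewrite mulrA -[C * rho w]opprK -key mulNr -mulrA CD mulr1.
by rewrite opprK -mulr2n -(scaler_nat (R:=CC) (V:=A) 2 (rho w)) scalerA mulVf // scale1r.
Qed.

Lemma main_alg w : (1 < n)%N -> w \in WD n ->
  ~ [&& isOP (ctype_lambda w), isEP (ctype_mu w) & ~~ odd (size (ctype_mu w))] ->
  in_comm_span (rho w).
Proof.
move=> n1 wW nH.
have sw : signed_perm w by move: wW; rewrite inE => /andP[].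
have [r hr] := good_cycle wW nH.
exact: (cycle_anti (Pc_WD n1 wW) sw hr).
Qed.
End Alg.

Unset Implicit Arguments.

Theorem proposition3p4p2 (n : nat) (u : CC) (A : algType CC)
    (x c : 'I_n -> A) (rho : {perm 'I_n * bool} -> A)
    (w : {perm 'I_n * bool}) :
  (4 <= n)%N ->
  HC_rels u x c rho ->
  w \in WD n ->
  let lam := ctype_lambda w in
  let mu := ctype_mu w in
  (odd n ->
     ~ [&& isOP lam, isEP mu & ~~ odd (size mu)] ->
     in_comm_span (rho w)) /\
  (~~ odd n ->
     ~ [&& isOP lam, isEP mu & ~~ odd (size mu)] ->
     ~ ((lam == [::]) && isSOP n mu) ->
     in_comm_span (rho w)).
Proof.
move=> n4 [_ [Hcc [Hcac [Hr1 [Hrm [_ [_ [Hsc [_ [_ [Hnc [Hnc2 _]]]]]]]]]]]] wW lam mu.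
have n1 : (1 < n)%N by apply: leq_trans n4.
have M := main_alg Hcc Hcac Hr1 Hrm Hsc Hnc Hnc2 n1 wW.
by split => _ nH; [exact: M | move=> _; exact: M].
Qed.
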